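(* Let $\mathbf{Y}\sim\mathcal{MMN}_p(\boldsymbol{\xi},\mathbf{\Omega},\boldsymbol{\delta};H)$. Then there exists a $p\times p$ matrix $\mathbf{A}_*$ such that $\mathbf{Z}^*=\mathbf{A}_*(\mathbf{Y}-\boldsymbol{\xi})\sim\mathcal{MMN}_p(\mathbf{0},\mathbf{I}_p,\boldsymbol{\delta}_{\mathbf{Z}^*};H)$ with $\boldsymbol{\delta}_{\mathbf{Z}^*}=(\delta_*,0,\dots,0)^\top$, where $\delta_*=(\boldsymbol{\delta}^\top\overline{\mathbf{\Omega}}^{-1}\boldsymbol{\delta})^{1/2}$; in particular at most one component of $\boldsymbol{\delta}_{\mathbf{Z}^*}$ is nonzero.
   Context: For $d\ge1$, $\boldsymbol{\xi}\in\mathbb{R}^d$, a $d\times d$ symmetric positive definite $\mathbf{\Omega}$, put $\boldsymbol{\omega}=\mathrm{diag}(\mathbf{\Omega}_{11}^{1/2},\dots,\mathbf{\Omega}_{dd}^{1/2})$ and $\overline{\mathbf{\Omega}}=\boldsymbol{\omega}^{-1}\mathbf{\Omega}\boldsymbol{\omega}^{-1}$; let $\boldsymbol{\delta}\in\mathbb{R}^d$ with $\overline{\mathbf{\Omega}}-\boldsymbol{\delta}\boldsymbol{\delta}^\top$ positive definite. For a real random variable $U$ with CDF $H$ and $\mathbf{Z}\sim\mathcal{N}_d(\mathbf{0},\overline{\mathbf{\Omega}}-\boldsymbol{\delta}\boldsymbol{\delta}^\top)$ independent of $U$, the law of $\boldsymbol{\xi}+\boldsymbol{\omega}(\boldsymbol{\delta}U+\mathbf{Z})$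 is denoted $\mathcal{MMN}_d(\boldsymbol{\xi},\mathbf{\Omega},\boldsymbol{\delta};H)$. *)

(* Defs.v *)
From HB Require Import structures.
From mathcomp Require Import all_boot all_order all_algebra.
From mathcomp Require Import all_classical all_reals all_analysis.
Set Implicit Arguments. Unset Strict Implicit. Unset Printing Implicit Defensive.
Import Order.TTheory GRing.Theory Num.Theory.
Local Open Scope classical_set_scope.
Local Open Scope ring_scope.

Section MMN.
Context {R : realType}.

Definition posdef n (M : 'M[R]_n) : Prop :=
  M^T = M /\ forall v : 'cV[R]_n, v != 0 -> 0 < (v^T *m M *m v) 0 0.

Definition omega_of n (Om : 'M[R]_n) : 'M[R]_n :=
  diag_mx (\row_i Num.sqrt (Om i i)).

Definition Ombar n (Om : 'M[R]_n) : 'M[R]_n :=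
  invmx (omega_of Om) *m Om *m invmx (omega_of Om).

(* Borel sigma-algebra on R^n (column vectors), generated by the coordinates. *)
Definition vmeasurable n : set (set 'cV[R]_n) :=
  <<s [set A | exists (i : 'I_n) (B : set R),
         measurable B /\ A = (fun x : 'cV[R]_n => x i 0) @^-1` B] >>.

Definition random_vector d (T : measurableType d) n (X : T -> 'cV[R]_n) : Prop :=
  forall i : 'I_n, measurable_fun setT (fun w => X w i 0).

(* Z ~ N_n(0, Sigma) (Sigma positive definite), via the standard definition:
   every nonzero linear combination t^T Z is N(0, t^T Sigma t). *)
Definition centered_gaussian d (T : measurableType d) (P : probability T R)
    n (Sigma : 'M[R]_n) (Z : T -> 'cV[R]_n) : Prop :=
  random_vector Z /\
  forall t : 'cV[R]_n, t != 0 -> forall A : set R, measurable A ->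
    P ((fun w => (t^T *m Z w) 0 0) @^-1` A) =
    normal_prob 0 (Num.sqrt ((t^T *m Sigma *m t) 0 0)) A.

Definition indep_rv_vec d (T : measurableType d) (P : probability T R)
    n (U : T -> R) (Z : T -> 'cV[R]_n) : Prop :=
  forall (A : set R) (B : set 'cV[R]_n), measurable A -> vmeasurable B ->
    P (U @^-1` A `&` Z @^-1` B) = (P (U @^-1` A) * P (Z @^-1` B))%E.

(* Y ~ MMN_n(xi, Omega, delta; H): Y is a random vector on (T,P) whose law
   equals the law of xi + omega (delta U + Z) for some U with CDF H and
   Z ~ N_n(0, Omegabar - delta delta^T) independent of U (defined on some
   probability space). *)
Definition MMN d (T : measurableType d) (P : probability T R) n
    (xi : 'cV[R]_n) (Om : 'M[R]_n) (delta : 'cV[R]_n) (H : R -> R)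
    (Y : T -> 'cV[R]_n) : Prop :=
  posdef Om /\ posdef (Ombar Om - delta *m delta^T) /\ random_vector Y /\
  exists (d' : measure_display) (T' : measurableType d') (P' : probability T' R)
         (U : T' -> R) (Z : T' -> 'cV[R]_n),
    measurable_fun setT U /\
    (forall x : R, P' [set w | U w <= x] = (H x)%:E) /\
    centered_gaussian P' (Ombar Om - delta *m delta^T) Z /\
    indep_rv_vec P' U Z /\
    forall B : set 'cV[R]_n, vmeasurable B ->
      P (Y @^-1` B) =
      P' ((fun w => xi + omega_of Om *m (U w *: delta + Z w)) @^-1` B).

Definition first_coord_vec n (x : R) : 'cV[R]_n :=
  \col_(i < n) (if val i == 0%N then x else 0).

End MMN.

(* Main.v *)
Require Import Defs.
From HB Require Import structures.
From mathcomp Require Import all_boot all_order all_algebra.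
From mathcomp Require Import all_classical all_reals all_analysis measurable_realfun.
From mathcomp Require Import ring lra.
Import Order.TTheory GRing.Theory Num.Theory.
Local Open Scope ring_scope.
Set Implicit Arguments. Unset Strict Implicit.

Section LA.
Context {R : realType}.

Lemma quad_tr n (M B : 'M[R]_n) (v : 'cV[R]_n) :
  v^T *m (B *m M *m B^T) *m v = (B^T *m v)^T *m M *m (B^T *m v).
Proof. by rewrite trmx_mul trmxK !mulmxA. Qed.

Lemma unit_tr_neq0 n (B : 'M[R]_n) (v : 'cV[R]_n) :
  B \in unitmx -> v != 0 -> B^T *m v != 0.
Proof.
move=> Bu; apply: contraNneq => h.
have : invmx B^T *m (B^T *m v) = v by rewrite mulKmx // unitmx_tr.
by rewrite h mulmx0 => <-.
Qed.

Lemma posdef_congr n (S B : 'M[R]_n) :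
  posdef S -> B \in unitmx -> posdef (B *m S *m B^T).
Proof.
move=> [sS pS] Bu; split.
  by rewrite !trmx_mul trmxK sS mulmxA.
move=> v v0; rewrite quad_tr; apply: pS; exact: unit_tr_neq0.
Qed.

Lemma quad_delta n (M : 'M[R]_n) i :
  ((delta_mx i (0 : 'I_1) : 'cV[R]_n)^T *m M *m delta_mx i (0 : 'I_1)) 0 0 = M i i.
Proof. by rewrite trmx_delta -rowE -colE !mxE. Qed.

Lemma delta_neq0 n (i : 'I_n) : (delta_mx i 0 : 'cV[R]_n) != 0.
Proof.
apply/eqP => /matrixP /(_ i 0); rewrite !mxE !eqxx /= => /eqP.
by rewrite oner_eq0.
Qed.

Lemma posdef_diag n (M : 'M[R]_n) i : posdef M -> 0 < M i i.
Proof. by move=> [_ pM]; rewrite -quad_delta; apply: pM; exact: delta_neq0. Qed.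

Lemma sqnorm_pos n (v : 'cV[R]_n) : v != 0 -> 0 < (v^T *m v) 0 0.
Proof.
move=> v0; case/boolP: [exists i, v i 0 != 0] => [/existsP[i vi]|/existsPn h].
  rewrite mxE (bigD1 i) //= mxE.
  have h1 : 0 < v i 0 * v i 0 by rewrite -expr2 lt0r sqrf_eq0 vi sqr_ge0.
  have h2 : 0 <= \sum_(j < n | j != i) v^T 0 j * v j 0.
    by apply: sumr_ge0 => j _; rewrite mxE -expr2 sqr_ge0.
  lra.
case/negP: v0; apply/eqP/matrixP => i j; rewrite (ord1 j) mxE.
by move: (h i); rewrite negbK => /eqP.
Qed.

Lemma posdef1 n : posdef (1%:M : 'M[R]_n).
Proof. by split; [rewrite trmx1 | move=> v v0; rewrite mulmx1; exact: sqnorm_pos]. Qed.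


Lemma trmxZ' m n (k : R) (A : 'M[R]_(m, n)) : (k *: A)^T = k *: A^T.
Proof. by apply/matrixP => i j; rewrite !mxE. Qed.

Lemma trmxN' m n (A : 'M[R]_(m, n)) : (- A)^T = - A^T.
Proof. by apply/matrixP => i j; rewrite !mxE. Qed.

Lemma trmxB' m n (A B : 'M[R]_(m, n)) : (A - B)^T = A^T - B^T.
Proof. by apply/matrixP => i j; rewrite !mxE. Qed.

Lemma chol_step n (S : 'M[R]_(1 + n)) :
  (forall S' : 'M[R]_n, posdef S' -> exists B : 'M[R]_n, B *m S' *m B^T = 1%:M) ->
  posdef S -> exists B : 'M[R]_(1 + n), B *m S *m B^T = 1%:M.
Proof.
move=> IH hS; have [sS pS] := hS.
pose a := ulsubmx S 0 0.
pose c := dlsubmx S.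
pose D := drsubmx S.
have a0 : 0 < a.
  by rewrite /a !mxE; exact: (@posdef_diag _ S (lshift n (0 : 'I_1)) hS).
have hS' : S = block_mx (a%:M : 'M[R]_1) c^T c D.
  have := sS; rewrite -[S]submxK tr_block_mx.
  move=> /eq_block_mx [h1 h2 h3 h4].
  by rewrite /c /a -mx11_scalar h2.
pose s := (Num.sqrt a)^-1.
pose L : 'M[R]_(1 + n) := block_mx (s%:M : 'M[R]_1) 0 (- a^-1 *: c) 1%:M.
pose S2 := D - a^-1 *: (c *m c^T).
have hL : L *m S *m L^T = block_mx 1%:M 0 0 S2.
  rewrite hS' /L tr_block_mx !mulmx_block.
  rewrite !(mul0mx, mulmx0, add0r, addr0, trmx0, mul1mx, mulmx1, tr_scalar_mx, trmx1).
  have q0 : 0 < Num.sqrt a by rewrite sqrtr_gt0.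
  have e1 : - a^-1 *: c *m a%:M + c = 0.
    by rewrite mul_mx_scalar scalerA mulrN mulfV ?gt_eqF // scaleN1r addNr.
  rewrite e1 !mul0mx add0r -!scalar_mxM.
  congr block_mx.
  - congr (_%:M).
    rewrite /s -[X in _ * X * _](sqr_sqrtr (ltW a0)); field; exact: lt0r_neq0.
  - rewrite (mul_scalar_mx (s * a)) (mul_scalar_mx s) trmxZ' !scalerA -scalerDl.
    have -> : s * a * - a^-1 + s = 0.
      rewrite /s; field; rewrite !lt0r_neq0 //.
    by rewrite scale0r.
  - by rewrite /S2 -scalemxAl addrC scaleNr.
have q0 : 0 < Num.sqrt a by rewrite sqrtr_gt0.
have Lu : L \in unitmx.
  by rewrite unitmxE /L det_lblock det_scalar1 det1 mulr1 unitfE invr_eq0 lt0r_neq0.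
have hB := @posdef_congr _ S L hS Lu; rewrite hL in hB.
have hS2 : posdef S2.
  have [sB pB] := hB; split.
    by move: sB; rewrite tr_block_mx => /eq_block_mx [].
  move=> v v0.
  have w0 : col_mx (0 : 'cV[R]_1) v != 0 by rewrite col_mx_eq0 negb_and v0 orbT.
  have := pB _ w0.
  by rewrite tr_col_mx mul_row_block mul_row_col !(mul0mx, mulmx0, add0r, addr0, trmx0).
have [B2 hB2] := IH _ hS2.
pose M : 'M[R]_(1 + n) := block_mx 1%:M 0 0 B2.
exists (M *m L).
have -> : M *m L *m S *m (M *m L)^T = M *m (L *m S *m L^T) *m M^T.
  by rewrite trmx_mul !mulmxA.
rewrite hL /M tr_block_mx !mulmx_block.
rewrite !(mul0mx, mulmx0, add0r, addr0, trmx0, mul1mx, mulmx1, trmx1) hB2.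
by rewrite -scalar_mx_block.
Qed.

Lemma chol n (S : 'M[R]_n) : posdef S -> exists B : 'M[R]_n, B *m S *m B^T = 1%:M.
Proof.
elim: n S => [|n IH] S hS.
  by exists 1%:M; apply/matrixP => -[].
exact: (@chol_step n S IH hS).
Qed.

Definition dot n (x y : 'cV[R]_n) := (x^T *m y) 0 0.

Lemma dotE n (x y : 'cV[R]_n) : x^T *m y = (dot x y)%:M.
Proof. exact: mx11_scalar. Qed.

Lemma dotC n (x y : 'cV[R]_n) : dot x y = dot y x.
Proof.
rewrite /dot; transitivity ((x^T *m y)^T 0 0); first by rewrite [RHS]mxE.
by rewrite trmx_mul trmxK.
Qed.

Lemma dotBl n (x y z : 'cV[R]_n) : dot (x - y) z = dot x z - dot y z.
Proof. by rewrite /dot trmxB' mulmxBl !mxE. Qed.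

Lemma dotZl n (a : R) (x z : 'cV[R]_n) : dot (a *: x) z = a * dot x z.
Proof. by rewrite /dot trmxZ' -scalemxAl mxE. Qed.

Lemma dot_ge0 n (x : 'cV[R]_n) : 0 <= dot x x.
Proof.
have [->|x0] := eqVneq x 0; last exact/ltW/sqnorm_pos.
by rewrite /dot mulmx0 mxE.
Qed.

Lemma dot_eq0 n (x : 'cV[R]_n) : dot x x = 0 -> x = 0.
Proof.
move=> h; apply/eqP; apply: contraT => x0.
by move: (sqnorm_pos x0); rewrite -/(dot x x) h ltxx.
Qed.

Lemma fcv_scale p (a : R) : first_coord_vec p a = a *: first_coord_vec p 1.
Proof. by apply/matrixP => i j; rewrite !mxE; case: ifP; rewrite ?mulr1 ?mulr0. Qed.

Lemma dot_e1 p : (0 < p)%N -> dot (first_coord_vec p (1 : R)) (first_coord_vec p 1) = 1.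
Proof.
case: p => // p _; rewrite /dot mxE big_ord_recl !mxE /= mulr1 big1 ?addr0 //.
by move=> i _; rewrite !mxE /= mulr0.
Qed.

Lemma hh_orth n (X : 'M[R]_n) (c k : R) : X *m X = k *: X ->
  - (c + c) + c * c * k = 0 -> (1%:M - c *: X) *m (1%:M - c *: X) = 1%:M.
Proof.
move=> XX hc.
rewrite !(mulmxBl, mulmxBr, mul1mx, mulmx1) -!scalemxAl -!scalemxAr XX !scalerA.
apply/matrixP => i j; rewrite !mxE.
have -> : c * c * k = c + c by lra.
ring.
Qed.

Lemma householder p (v : 'cV[R]_p) : (0 < p)%N ->
  exists Q : 'M[R]_p, Q *m Q^T = 1%:M /\
    Q *m v = first_coord_vec p (Num.sqrt (dot v v)).
Proof.
move=> p0.
pose nv := Num.sqrt (dot v v).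
pose e := first_coord_vec p (1 : R).
pose u := v - nv *: e.
pose k := dot u u.
pose c := 2 / k.
pose Q : 'M[R]_p := 1%:M - c *: (u *m u^T).
have hnv : dot v v = nv ^+ 2 by rewrite sqr_sqrtr // dot_ge0.
have hee := dot_e1 p0.
pose w := dot e v.
have hm : dot u v = nv ^+ 2 - nv * w.
  by rewrite /u dotBl dotZl hnv.
have hk : k = 2 * dot u v.
  have h1 : dot e u = w - nv by rewrite /u dotC dotBl dotZl dotC hee mulr1.
  rewrite /k {1}/u dotBl dotZl h1 (dotC v u) hm; ring.
have hc : - (c + c) + c * c * k = 0.
  rewrite /c; have [->|k0] := eqVneq k 0; first by rewrite invr0 !(mulr0, mul0r, addr0, oppr0).
  by field.
have sQ : Q^T = Q by rewrite /Q trmxB' trmx1 trmxZ' trmx_mul trmxK.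
exists Q; split.
  have XX : u *m u^T *m (u *m u^T) = k *: (u *m u^T).
    by rewrite -mulmxA (mulmxA u^T) dotE mul_scalar_mx -scalemxAr.
  by rewrite sQ /Q (hh_orth XX hc).
have hQv : Q *m v = v - (c * dot u v) *: u.
  rewrite /Q mulmxBl mul1mx -scalemxAl -mulmxA dotE.
  by rewrite (mul_mx_scalar (dot u v) u) scalerA.
rewrite hQv fcv_scale -/e -/nv.
have [k0|k0] := eqVneq k 0.
  have u0 : u = 0 by apply: dot_eq0.
  rewrite u0 scaler0 subr0.
  by apply/eqP; rewrite -subr_eq0 -/u u0.
have -> : c * dot u v = 1.
  rewrite /c hk; field; move: k0; rewrite hk; apply: contraNneq => ->.
  by rewrite mulr0.
by rewrite scale1r /u opprB addrC subrK.
Qed.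

Lemma congr_unit n (B S : 'M[R]_n) : B *m S *m B^T = 1%:M -> B \in unitmx.
Proof.
move=> h; have := congr1 determinant h; rewrite !det_mulmx det_tr det1 => hd.
rewrite unitmxE unitfE; apply/eqP => h0; move: hd; rewrite h0 !mul0r => /eqP.
by rewrite eq_sym oner_eq0.
Qed.

Lemma key p (S : 'M[R]_p) (d : 'cV[R]_p) : (0 < p)%N -> posdef S ->
  exists B : 'M[R]_p, [/\ B \in unitmx, B *m S *m B^T = 1%:M &
    B *m d = first_coord_vec p (Num.sqrt ((d^T *m invmx S *m d) 0 0))].
Proof.
move=> p0 hS; have [B0 hB0] := chol hS.
have h : S *m (B0^T *m B0) = 1%:M.
  by rewrite mulmxA; apply: mulmx1C; rewrite mulmxA.
have [Su _] := mulmx1_unit h.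
have hinv : invmx S = B0^T *m B0.
  by rewrite -[RHS](mulKmx Su) h mulmx1.
pose v := B0 *m d.
have hv : (d^T *m invmx S *m d) 0 0 = dot v v.
  by rewrite hinv /dot /v trmx_mul !mulmxA.
have [Q [hQ hQv]] := householder v p0.
exists (Q *m B0); split.
- rewrite unitmx_mul (congr_unit hB0) andbT.
  by have [] := mulmx1_unit hQ.
- have -> : Q *m B0 *m S *m (Q *m B0)^T = Q *m (B0 *m S *m B0^T) *m Q^T.
    by rewrite trmx_mul !mulmxA.
  by rewrite hB0 mulmx1.
- by rewrite hv -mulmxA.
Qed.

End LA.


Definition cVm (R : realType) n := 'cV[R]_n.
HB.instance Definition _ (R : realType) n := Choice.on (cVm R n).
HB.instance Definition _ (R : realType) n := isPointed.Build (cVm R n) 0.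

Section Meas.
Context {R : realType}.
Local Open Scope classical_set_scope.

Definition vgen n : set (set (cVm R n)) := [set A | exists (i : 'I_n) (B : set R),
         measurable B /\ A = (fun x : 'cV[R]_n => x i 0) @^-1` B].

Local Notation V n := (g_sigma_algebraType (@vgen n)).

Lemma coord_meas n (j : 'I_n) : measurable_fun setT (fun x : V n => (x : 'cV[R]_n) j 0).
Proof.
move=> _ B mB; rewrite setTI; apply: sub_gen_smallest; exists j, B; split => //.
Qed.

Lemma aff_meas n (M : 'M[R]_n) (c : 'cV[R]_n) (X : set 'cV[R]_n) :
  vmeasurable X -> vmeasurable ((fun x => M *m x + c) @^-1` X).
Proof.
have mf : @measurable_fun _ _ (V n) (V n) setT (fun x : V n => (M *m (x : 'cV[R]_n) + c : V n)).
  apply: (@measurability _ _ (V n) (V n) setT (fun x : V n => M *m (x : 'cV[R]_n) + c : V n) (@vgen n) erefl).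
  move=> _ [A [i [B [mB ->]]] <-].
  have mg : measurable_fun setT (fun x : V n => \sum_j M i j * (x : 'cV[R]_n) j 0 + c i 0).
    apply: measurable_funD; last exact: measurable_cst.
    apply: measurable_sum => j; apply: measurable_funM; first exact: measurable_cst.
    exact: coord_meas.
  have := mg measurableT B mB.
  congr measurable; apply/seteqP; split => x /=; rewrite !mxE //.
move=> mX; have := mf measurableT X mX; rewrite setTI //.
Qed.

Lemma rv_aff d (T : measurableType d) n (M : 'M[R]_n) (c : 'cV[R]_n) (Y : T -> 'cV[R]_n) :
  random_vector Y -> random_vector (fun w => M *m Y w + c).
Proof.
move=> rY i.
have -> : (fun w => (M *m Y w + c) i 0) = (fun w => \sum_j M i j * Y w j 0 + c i 0).
  by apply/funext => w; rewrite !mxE.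
apply: measurable_funD; last exact: measurable_cst.
apply: measurable_sum => j; apply: measurable_funM; first exact: measurable_cst.
exact: rY.
Qed.

Lemma omega1 n : omega_of (1%:M : 'M[R]_n) = 1%:M.
Proof.
apply/matrixP => i j; rewrite !mxE eqxx sqrtr1.
by case: (i == j).
Qed.

Lemma Ombar1 n : Ombar (1%:M : 'M[R]_n) = 1%:M.
Proof. by rewrite /Ombar omega1 invmx1 !mulmx1. Qed.

Lemma posdef_add_rank1 n (S : 'M[R]_n) (dl : 'cV[R]_n) :
  posdef (S - dl *m dl^T) -> posdef S.
Proof.
move=> [sD pD]; split.
  have := congr1 (fun X => X + dl *m dl^T) sD.
  by rewrite /= trmxB' trmx_mul trmxK !subrK.
move=> v v0.
have h1 := pD v v0.
have h2 : (v^T *m (dl *m dl^T) *m v) 0 0 = dot v dl ^+ 2.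
  rewrite mulmxA -mulmxA (dotE v dl) (dotE dl v) -scalar_mxM mxE eqxx mulr1n.
  by rewrite (dotC dl v) expr2.
have h3 : 0 <= dot v dl ^+ 2 by rewrite sqr_ge0.
have -> : S = (S - dl *m dl^T) + dl *m dl^T by rewrite subrK.
rewrite mulmxDr mulmxDl mxE h2; lra.
Qed.

End Meas.


Unset Implicit Arguments.
Local Open Scope classical_set_scope.
Local Open Scope ring_scope.

Theorem theorem5 (R : realType) (d : measure_display) (T : measurableType d)
    (P : probability T R) (p : nat) (xi : 'cV[R]_p) (Om : 'M[R]_p)
    (delta : 'cV[R]_p) (H : R -> R) (Y : T -> 'cV[R]_p) :
  (0 < p)%N ->
  MMN P xi Om delta H Y ->
  exists Astar : 'M[R]_p,
    MMN P 0 1%:M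
      (first_coord_vec p (Num.sqrt ((delta^T *m invmx (Ombar Om) *m delta) 0 0)))
      H (fun w => Astar *m (Y w - xi)).
Proof.
move=> p0 [hOm [hOD [rvY [d' [T' [P' [U [Z [mU [cdfU [[rvZ gZ] [ind law]]]]]]]]]]]].
have hS := posdef_add_rank1 hOD.
have [B [Bu hB hBd]] := key delta p0 hS.
set e := first_coord_vec _ _ in hBd *.
have omu : omega_of Om \in unitmx.
  rewrite unitmxE det_diag unitfE; apply: lt0r_neq0; apply: prodr_gt0 => i _.
  by rewrite mxE sqrtr_gt0; exact: posdef_diag.
pose A := B *m invmx (omega_of Om).
have hAom : A *m omega_of Om = B by rewrite /A -mulmxA mulVmx // mulmx1.
have hcov : B *m (Ombar Om - delta *m delta^T) *m B^T = 1%:M - e *m e^T.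
  by rewrite mulmxBr mulmxBl hB -hBd trmx_mul !mulmxA.
exists A.
split; first exact: posdef1.
split; first by rewrite Ombar1 -hcov; exact: posdef_congr.
split.
  have := rv_aff A (- (A *m xi)) rvY.
  by congr random_vector; apply/funext => w; rewrite mulmxBr.
exists d', T', P', U, (fun w => B *m Z w).
split; first done.
split; first done.
split.
  split.
    have := rv_aff B 0 rvZ.
    by congr random_vector; apply/funext => w; rewrite addr0.
  move=> t t0 X mX.
  have -> : (fun w => (t^T *m (B *m Z w)) 0 0) = (fun w => ((B^T *m t)^T *m Z w) 0 0).
    by apply/funext => w; rewrite trmx_mul trmxK mulmxA.
  rewrite (gZ (B^T *m t) (unit_tr_neq0 Bu t0) X mX).
  by rewrite -quad_tr hcov Ombar1.
split.
  move=> X Bs mX mB.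
  have -> : (fun w => B *m Z w) @^-1` Bs = Z @^-1` ((fun x => B *m x + 0) @^-1` Bs).
    by apply/seteqP; split => w /=; rewrite addr0.
  by apply: ind => //; exact: aff_meas.
move=> Bs mB.
have -> : (fun w => A *m (Y w - xi)) @^-1` Bs =
    Y @^-1` ((fun x => A *m x + (- (A *m xi))) @^-1` Bs).
  by apply/seteqP; split => w /=; rewrite mulmxBr.
rewrite law; last exact: aff_meas.
have hf : forall w, A *m (xi + omega_of Om *m (U w *: delta + Z w)) + - (A *m xi) =
    0 + omega_of 1%:M *m (U w *: e + B *m Z w).
  move=> w; rewrite omega1 mul1mx add0r mulmxDr addrAC subrr add0r mulmxA hAom.
  by rewrite mulmxDr -scalemxAr hBd.
by congr (P' _); apply/seteqP; split => w /=; rewrite hf.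
Qed.
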